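(* Let $\mathcal C=\mathcal C(I,A,(\rho_i)_{i\in I},(C^a)_{a\in A})$ be a connected Cartan scheme and $\mathcal R=\mathcal R(\mathcal C,(R^a)_{a\in A})$ a root system of type $\mathcal C$. Let $a\in A$ and $i,j\in I$ with $i\neq j$. The following are equivalent: (1) $c^a_{ij}=c^a_{ji}=0$; (2) $R^a\cap(\mathbb N_0\alpha_i+\mathbb N_0\alpha_j)=\{\alpha_i,\alpha_j\}$; (3) $m^a_{i,j}=2$.
   Context: Let $I$ be a nonempty finite set and $\{\alpha_i\mid i\in I\}$ the standard basis of $\mathbb Z^I$; $\mathbb N_0=\{0,1,2,\dots\}$. A generalized Cartan matrix is $C=(c_{ij})_{i,j\in I}\in\mathbb Z^{I\times I}$ with $c_{ii}=2$, $c_{jk}\le0$ for $j\ne k$, and $c_{ij}=0\Rightarrow c_{ji}=0$. A Cartan scheme $\mathcal C=\mathcal C(I,A,(\rho_i)_{i\in I},(C^a)_{a\in A})$ consists of a nonempty set $A$, maps $\rho_i:A\to A$ and generalized Cartan matrices $C^a=(c^a_{jk})_{j,k\in I}$ such that (C1) $\rho_i^2=\mathrm{id}$ and (C2) $c^a_{ij}=c^{\rho_i(a)}_{ij}$ for all $a\in A$, $i,j\in I$. It is connected if the group generated by the $\rho_i$ acts transitively on $A$. For $i\in I$, $a\in A$ let $\sigma_i^a\in\mathrm{Aut}(\mathbb Z^I)$, $\sigma_i^a(\alpha_j)=\alpha_j-c^a_{ij}\alpha_i$. A root system of type $\mathcal C$ is a family $\mathcal R=\mathcal R(\mathcal C,(R^a)_{a\in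 A})$ of subsets $R^a\subset\mathbb Z^I$ such that, writing $R^a_+=R^a\cap\mathbb N_0^I$ and $m^a_{i,j}=|R^a\cap(\mathbb N_0\alpha_i+\mathbb N_0\alpha_j)|$, for all $a\in A$, $i,j\in I$: (R1) $R^a=R^a_+\cup(-R^a_+)$; (R2) $R^a\cap\mathbb Z\alpha_i=\{\alpha_i,-\alpha_i\}$; (R3) $\sigma_i^a(R^a)=R^{\rho_i(a)}$; (R4) if $i\neq j$ and $m^a_{i,j}$ is finite then $(\rho_i\rho_j)^{m^a_{i,j}}(a)=a$. *)

(* Defs.v *)
From mathcomp Require Import all_boot all_order all_algebra.
Set Implicit Arguments. Unset Strict Implicit. Unset Printing Implicit Defensive.
Import Order.TTheory GRing.Theory Num.Theory.
Local Open Scope ring_scope.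

Definition vecZ (I : finType) := {ffun I -> int}.

Definition alpha (I : finType) (i : I) : vecZ I := [ffun k => ((k == i) : nat)%:Z].

Definition is_gcm (I : finType) (C : I -> I -> int) : Prop :=
  (forall i, C i i = 2) /\
  (forall j k, j != k -> C j k <= 0) /\
  (forall i j, C i j = 0 -> C j i = 0).

Definition cartan_scheme (I : finType) (A : Type) (rho : I -> A -> A)
  (C : A -> I -> I -> int) : Prop :=
  (exists a : A, True) /\
  (forall a, is_gcm (C a)) /\
  (forall i a, rho i (rho i a) = a) /\
  (forall a i j, C a i j = C (rho i a) i j).

Definition rho_word (I : finType) (A : Type) (rho : I -> A -> A) (w : seq I) (a : A) : A :=
  foldr (fun i x => rho i x) a w.

(* connected: the group generated by the rho_i (involutions) acts transitively *)
Definition connected_scheme (I : finType) (A : Type) (rho : I -> A -> A) : Prop :=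
  forall a b : A, exists w : seq I, rho_word rho w a = b.

(* sigma_i^a (v) = v - (sum_j c^a_ij v_j) alpha_i, i.e. sigma(alpha_j) = alpha_j - c_ij alpha_i *)
Definition sigma (I : finType) (A : Type) (C : A -> I -> I -> int) (i : I) (a : A)
  (v : vecZ I) : vecZ I :=
  [ffun k => v k - (\sum_(j : I) C a i j * v j) * alpha i k].

Definition nonneg (I : finType) (v : vecZ I) : Prop := forall k, 0 <= v k.

Definition negv (I : finType) (v : vecZ I) : vecZ I := [ffun k => - v k].

Definition in_cone (I : finType) (i j : I) (v : vecZ I) : Prop :=
  exists p q : nat, v = [ffun k => p%:Z * alpha i k + q%:Z * alpha j k].

(* m^a_{i,j} is finite and equals m *)
Definition m_is (I : finType) (A : Type) (R : A -> vecZ I -> Prop) (a : A) (i j : I)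
  (m : nat) : Prop :=
  exists s : seq (vecZ I), uniq s /\ (forall v, v \in s <-> (R a v /\ in_cone i j v))
                         /\ size s = m.

Definition root_system (I : finType) (A : Type) (rho : I -> A -> A)
  (C : A -> I -> I -> int) (R : A -> vecZ I -> Prop) : Prop :=
  (forall a v, R a v <-> ((R a v /\ nonneg v) \/ (R a (negv v) /\ nonneg (negv v)))) /\
  (forall a i (z : int), R a [ffun k => z * alpha i k] <-> (z = 1 \/ z = -1)) /\
  (forall a i v, R (rho i a) v <-> exists w, R a w /\ sigma C i a w = v) /\
  (forall a i j (m : nat), i != j -> m_is R a i j m ->
     rho_word rho (flatten (nseq m [:: i; j])) a = a).

(* Main.v *)
Require Import Defs.
From mathcomp Require Import all_boot all_order all_algebra zify.
Import Order.TTheory GRing.Theory Num.Theory.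
Local Open Scope ring_scope.

Lemma alpha_same (I : finType) (i : I) : alpha i i = 1.
Proof. by rewrite /alpha ffunE eqxx. Qed.

Lemma alpha_diff (I : finType) (i k : I) : k != i -> alpha i k = 0.
Proof. by move=> h; rewrite /alpha ffunE (negbTE h). Qed.

Lemma sum_alpha (I : finType) (i : I) (F : I -> int) :
  \sum_l F l * alpha i l = F i.
Proof.
rewrite (bigD1 i) //= alpha_same mulr1 big1 ?addr0 // => l hl.
by rewrite alpha_diff // mulr0.
Qed.

Lemma R2one (I : finType) (A : Type) (R : A -> vecZ I -> Prop) :
  (forall a i (z : int), R a [ffun k => z * alpha i k] <-> (z = 1 \/ z = -1)) ->
  forall a i, R a (alpha i).
Proof.
move=> H a i; have -> : alpha i = [ffun k => 1 * alpha i k].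
  by apply/ffunP => k; rewrite !ffunE mul1r.
by apply/H; left.
Qed.

Lemma two (T:eqType) (x y a b v : T) : a != b -> (a==x)||(a==y) -> (b==x)||(b==y) -> (v==x)||(v==y) -> v = a \/ v = b.
Proof.
move=> ab /orP[]/eqP e1 /orP[]/eqP e2 /orP[]/eqP e3; subst;
  first [by left | by right | by rewrite eqxx in ab].
Qed.

Theorem lemma4p4 (I : finType) (A : Type) (rho : I -> A -> A)
  (C : A -> I -> I -> int) (R : A -> vecZ I -> Prop) :
  cartan_scheme rho C -> connected_scheme rho -> root_system rho C R ->
  forall (a : A) (i j : I), i != j ->
    [<-> (C a i j = 0 /\ C a j i = 0);
         (forall v, (R a v /\ in_cone i j v) <-> (v = alpha i \/ v = alpha j));
         m_is R a i j 2].
Proof.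
move=> [_ [gcm [_ _]]] _ [R1 [R2 [R3 _]]] a i j ij.
have ji : j != i by rewrite eq_sym.
have aij : alpha i != alpha j.
  by apply/eqP => /ffunP /(_ i); rewrite alpha_same alpha_diff.
have Ri := @R2one _ _ R R2 a i; have Rj := @R2one _ _ R R2 a j.
have coneI : in_cone i j (alpha i).
  by exists 1%N, 0%N; apply/ffunP => k; rewrite !ffunE mul1r mul0r addr0.
have coneJ : in_cone i j (alpha j).
  by exists 0%N, 1%N; apply/ffunP => k; rewrite !ffunE mul1r mul0r add0r.
tfae.
- move=> [cij cji] v; split; last by case=> ->; split.
  move=> [Rv [p [q vE]]].
  have Hs : R (rho i a) (sigma C i a v) by apply/R3; exists v.
  have sE : sigma C i a v = [ffun k => - p%:Z * alpha i k + q%:Z * alpha j k].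
    apply/ffunP => k; rewrite /sigma !ffunE.
    have -> : \sum_l C a i l * v l = 2 * p%:Z.
      rewrite vE; under eq_bigr => l _ do rewrite ffunE mulrDr.
      rewrite big_split /=.
      rewrite (eq_bigr (fun l => (C a i l * p%:Z) * alpha i l)); last by move=> l _; rewrite mulrA.
      rewrite [X in _ + X](eq_bigr (fun l => (C a i l * q%:Z) * alpha j l)); last by move=> l _; rewrite mulrA.
      rewrite !sum_alpha cij mul0r addr0 (proj1 (gcm a)); lia.
    rewrite vE /alpha !ffunE; lia.
  rewrite sE in Hs.
  case/R1: Hs => [[_ nn] | [_ nn]].
  + have := nn i; rewrite /alpha !ffunE eqxx (negbTE ij) /= => h.
    have p0 : p = 0%N by lia.
    have vq : v = [ffun k => q%:Z * alpha j k].
      by rewrite vE; apply/ffunP => k; rewrite !ffunE p0 mul0r add0r.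
    have := Rv; rewrite vq => /R2 [q1|q1]; last lia.
    right; rewrite q1; apply/ffunP => k; by rewrite !ffunE mul1r.
  + have := nn j; rewrite /negv /alpha !ffunE eqxx (negbTE ji) /= => h.
    have q0 : q = 0%N by lia.
    have vp : v = [ffun k => p%:Z * alpha i k].
      by rewrite vE; apply/ffunP => k; rewrite !ffunE q0 mul0r addr0.
    have := Rv; rewrite vp => /R2 [p1|p1]; last lia.
    left; rewrite p1; apply/ffunP => k; by rewrite !ffunE mul1r.
- move=> H; exists [:: alpha i; alpha j]; split; first by rewrite /= inE aij.
  split=> // v; rewrite !inE; split.
  + by case/orP => /eqP ->; apply/H; [left|right].
  + by move/H => [->|->]; rewrite eqxx ?orbT.
- move=> [s [us [Hs ss]]].
  have H2 : forall v, R a v -> in_cone i j v -> v = alpha i \/ v = alpha j.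
    move=> v Rv cv.
    have vi : alpha i \in s by apply/Hs.
    have vj : alpha j \in s by apply/Hs.
    have vv : v \in s by apply/Hs.
    case: s us Hs ss vi vj vv => [|x [|y [|z s]]] //= us _ _.
    by rewrite !inE; apply: two.
  have Rja : R (rho i a) (alpha j) := @R2one _ _ R R2 (rho i a) j.
  case/R3: Rja => w [Rw sw].
  set c := \sum_l C a i l * w l.
  have wE : forall k, w k = alpha j k + c * alpha i k.
    move=> k; have := congr1 (fun f : vecZ I => f k) sw; rewrite /sigma ffunE -/c; lia.
  have cij : C a i j <= 0 := proj1 (proj2 (gcm a)) i j ij.
  have cE : c = - C a i j.
    have : c = \sum_l C a i l * (alpha j l + c * alpha i l).
      by rewrite /c; apply: eq_bigr => l _; rewrite wE.
    under eq_bigr => l _ do rewrite mulrDr.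
    rewrite big_split /=.
    rewrite [X in _ + X](eq_bigr (fun l => (C a i l * c) * alpha i l)); last by move=> l _; rewrite mulrA.
    rewrite !sum_alpha (proj1 (gcm a)); lia.
  have cw : in_cone i j w.
    exists (absz c), 1%N; apply/ffunP => k; rewrite ffunE wE.
    have -> : ((absz c)%:Z) = c by apply: gez0_abs; lia.
    lia.
  case: (H2 w Rw cw) => wa.
  + have := wE j; rewrite wa alpha_same !alpha_diff //; lia.
  + have := wE i; rewrite wa alpha_same !alpha_diff // => h.
    have c0 : C a i j = 0 by lia.
    by split=> //; apply: (proj2 (proj2 (gcm a))).
Qed.
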